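(* Let $(x_n)_{n\ge1}$ be a sequence of real numbers, $L\in\mathbb{R}$ and $\sigma\in\,]0,1]$. Then $i(x_n;L)\ge\sigma$ if and only if there exists a subsequence $(x_{k(n)})_{n\ge1}$ (with $k:\mathbb N\to\mathbb N$ strictly increasing) converging to $L$ such that \[ \delta_-\big(\{k(n)\mid n\in\mathbb N\}\big)\ge\sigma . \]
   Context: Let $\mathbb N=\{1,2,\dots\}$. For $K\subseteq\mathbb N$ the lower and upper densities are $\delta_-(K)=\liminf_{n\to\infty}\frac{|K\cap\{1,\dots,n\}|}{n}$ and $\delta_+(K)=\limsup_{n\to\infty}\frac{|K\cap\{1,\dots,n\}|}{n}$; when they coincide, their common value is the density $\delta(K)$. For a real sequence $(x_n)_{n\ge1}$ and $L\in\mathbb R$, the index of convergence of $(x_n)$ to $L$ is \[ i(x_n;L)=1-\sup_{\varepsilon>0}\delta_+\big(\{n\in\mathbb N\mid |x_n-L|\ge\varepsilon\}\big)=\inf_{\varepsilon>0}\delta_-\big(\{n\in\mathbb N\mid |x_n-L|<\varepsilon\}\big). \] *)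

(* Defs.v *)
From Stdlib Require Import Reals Lra Lia Classical ClassicalEpsilon.
Open Scope R_scope.

(* Supremum of a set of reals: the least upper bound when it exists,
   0 otherwise (only used on nonempty bounded sets of densities in [0,1]). *)
Definition Rsup (E : R -> Prop) : R :=
  match excluded_middle_informative (exists l, is_lub E l) with
  | left H => proj1_sig (constructive_indefinite_description _ H)
  | right _ => 0
  end.

Definition Rinf (E : R -> Prop) : R := - Rsup (fun y => E (- y)).

Fixpoint cnt (K : nat -> Prop) (m : nat) : nat :=
  match m with
  | O => O
  | S m' => (cnt K m' + (if excluded_middle_informative (K (S m')) then 1 else 0))%nat
  end.

Definition dens_ratio (K : nat -> Prop) (n : nat) : R :=
  INR (cnt K (S n)) / INR (S n).

(* liminf_{n->oo} of the ratios = sup_N inf_{n >= N} *)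
Definition lower_density (K : nat -> Prop) : R :=
  Rsup (fun y => exists N : nat,
          y = Rinf (fun z => exists n : nat, (N <= n)%nat /\ z = dens_ratio K n)).

Definition upper_density (K : nat -> Prop) : R :=
  Rinf (fun y => exists N : nat,
          y = Rsup (fun z => exists n : nat, (N <= n)%nat /\ z = dens_ratio K n)).

Definition index_conv (x : nat -> R) (L : R) : R :=
  Rinf (fun y => exists eps : R, eps > 0 /\
          y = lower_density (fun n => (1 <= n)%nat /\ Rabs (x n - L) < eps)).

(* Main.v *)
Require Import Defs.
From Stdlib Require Import Reals Lra Lia Classical ClassicalEpsilon Arith Wf_nat.
Open Scope R_scope.

Lemma Rsup_lub (E : R -> Prop) : (exists x, E x) -> bound E -> is_lub E (Rsup E).
Proof.
  intros Hne Hb. unfold Rsup.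
  destruct (excluded_middle_informative _) as [H|H].
  - destruct (constructive_indefinite_description _ H) as [l Hl]; exact Hl.
  - exfalso; apply H. destruct (completeness E Hb Hne) as [l Hl]. exists l; exact Hl.
Qed.

Lemma Rinf_lb (E : R -> Prop) (b : R) : (exists x, E x) -> (forall x, E x -> b <= x) ->
  (forall x, E x -> Rinf E <= x) /\ b <= Rinf E.
Proof.
  intros [x0 Hx0] Hb. unfold Rinf.
  assert (H : is_lub (fun y => E (- y)) (Rsup (fun y => E (- y)))).
  { apply Rsup_lub. exists (- x0). rewrite Ropp_involutive; auto.
    exists (- b). intros y Hy. specialize (Hb _ Hy). lra. }
  destruct H as [Hub Hleast]. unfold is_upper_bound in *. split.
  - intros x Hx. assert (Hx' : E (- - x)) by (rewrite Ropp_involutive; auto).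
    specialize (Hub _ Hx'). lra.
  - assert (Rsup (fun y => E (- y)) <= - b).
    { apply Hleast. intros y Hy. specialize (Hb _ Hy). lra. } lra.
Qed.

Lemma cnt_le (K : nat -> Prop) m : (cnt K m <= m)%nat.
Proof. induction m; simpl; [lia|]. destruct (excluded_middle_informative _); lia. Qed.

Lemma dens_bounds K n : 0 <= dens_ratio K n <= 1.
Proof.
  unfold dens_ratio. pose proof (cnt_le K (S n)) as H.
  apply le_INR in H. pose proof (pos_INR (cnt K (S n))).
  assert (Hp : 0 < INR (S n)) by (apply lt_0_INR; lia).
  pose proof (Rinv_0_lt_compat _ Hp).
  split.
  - unfold Rdiv. apply Rmult_le_pos; lra.
  - unfold Rdiv. rewrite <- (Rinv_r (INR (S n))) by lra.
    apply Rmult_le_compat_r; lra.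
Qed.

Definition infN K N := Rinf (fun z => exists n : nat, (N <= n)%nat /\ z = dens_ratio K n).

Lemma infN_prop K N : (forall n, (N <= n)%nat -> infN K N <= dens_ratio K n)
   /\ 0 <= infN K N /\ infN K N <= 1.
Proof.
  destruct (Rinf_lb (fun z => exists n : nat, (N <= n)%nat /\ z = dens_ratio K n) 0) as [H1 H2].
  - exists (dens_ratio K N); eauto.
  - intros z [n [_ ->]]. apply dens_bounds.
  - unfold infN. split; [|split]; auto.
    + intros n Hn. apply H1. eauto.
    + apply Rle_trans with (dens_ratio K N); [apply H1; eauto|apply dens_bounds].
Qed.

Lemma infN_glb K N b : (forall n, (N <= n)%nat -> b <= dens_ratio K n) -> b <= infN K N.
Proof.
  intros H. apply (Rinf_lb (fun z => exists n : nat, (N <= n)%nat /\ z = dens_ratio K n) b).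
  - exists (dens_ratio K N); eauto.
  - intros z [n [Hn ->]]. auto.
Qed.

Lemma ld_lub K : is_lub (fun y => exists N, y = infN K N) (lower_density K).
Proof.
  unfold lower_density. apply Rsup_lub. exists (infN K 0); exists 0%nat; reflexivity.
  exists 1. intros y [N ->]. apply infN_prop.
Qed.

Lemma ld_bounds K : 0 <= lower_density K <= 1.
Proof.
  destruct (ld_lub K) as [Hub Hl]. unfold is_upper_bound in *. split.
  - apply Rle_trans with (infN K 0); [apply infN_prop|apply Hub; eauto].
  - apply Hl. intros y [N ->]. apply infN_prop.
Qed.

Lemma ld_ge K s : lower_density K >= s <->
  forall eps, eps > 0 -> exists N, forall n, (N <= n)%nat -> dens_ratio K n > s - eps.
Proof.
  pose proof (ld_lub K) as [Hub Hl]. unfold is_upper_bound in *. split.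
  - intros Hs eps He.
    destruct (classic (exists N, infN K N > lower_density K - eps)) as [[N HN]|Hno].
    + exists N. intros n Hn. destruct (infN_prop K N) as [H1 _]. specialize (H1 n Hn). lra.
    + exfalso. assert (lower_density K <= lower_density K - eps); [|lra].
      apply Hl. intros y [N ->]. apply Rnot_gt_le. intro. apply Hno; eauto.
  - intros H. apply Rnot_lt_ge. intro Hlt.
    destruct (H ((s - lower_density K)/2)) as [N HN]; [lra|].
    assert (s - (s - lower_density K)/2 <= infN K N)
      by (apply infN_glb; intros; left; apply HN; auto).
    assert (infN K N <= lower_density K) by (apply Hub; eauto). lra.
Qed.

Lemma index_ge x L s : index_conv x L >= s <-> forall eps, eps > 0 ->
  lower_density (fun n => (1 <= n)%nat /\ Rabs (x n - L) < eps) >= s.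
Proof.
  unfold index_conv. split.
  - intros Hs eps He.
    destruct (Rinf_lb (fun y => exists eps, eps > 0 /\ y = lower_density (fun n => (1 <= n)%nat /\ Rabs (x n - L) < eps)) 0) as [H1 _].
    + exists (lower_density (fun n => (1 <= n)%nat /\ Rabs (x n - L) < 1)). exists 1. split; [lra|auto].
    + intros y [e [_ ->]]. apply ld_bounds.
    + specialize (H1 _ (ex_intro _ eps (conj He eq_refl))). lra.
  - intros H. apply Rle_ge.
    apply (Rinf_lb (fun y => exists eps, eps > 0 /\ y = lower_density (fun n => (1 <= n)%nat /\ Rabs (x n - L) < eps)) s).
    + exists (lower_density (fun n => (1 <= n)%nat /\ Rabs (x n - L) < 1)). exists 1. split; [lra|auto].
    + intros y [e [He ->]]. apply Rge_le, H, He.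
Qed.

Lemma cnt_union (K K1 K2 : nat -> Prop) M :
  (forall m, (1 <= m <= M)%nat -> K m -> K1 m \/ K2 m) -> (cnt K M <= cnt K1 M + cnt K2 M)%nat.
Proof.
  induction M; intros H; simpl; [lia|].
  assert (IH := IHM (fun m Hm => H m ltac:(lia))).
  destruct (excluded_middle_informative (K (S M))) as [k|k];
  destruct (excluded_middle_informative (K1 (S M))) as [k1|k1];
  destruct (excluded_middle_informative (K2 (S M))) as [k2|k2]; try lia.
  exfalso. destruct (H (S M) ltac:(lia) k); auto.
Qed.

Lemma cnt_bound (K : nat -> Prop) c : (forall j, (c < j)%nat -> ~ K j) -> forall m, (cnt K m <= c)%nat.
Proof.
  intros H m. induction m; [simpl; lia|].
  destruct (le_lt_dec (S m) c) as [Hl|Hl].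
  - pose proof (cnt_le K (S m)); lia.
  - simpl. destruct (excluded_middle_informative (K (S m))) as [k|k]; [exfalso; exact (H _ Hl k)|lia].
Qed.

Lemma dens_cmp K K' n c : (cnt K (S n) <= cnt K' (S n) + c)%nat ->
  dens_ratio K n <= dens_ratio K' n + INR c / INR (S n).
Proof.
  intros H. unfold dens_ratio. apply le_INR in H. rewrite plus_INR in H.
  assert (0 < INR (S n)) by (apply lt_0_INR; lia).
  unfold Rdiv. rewrite <- Rmult_plus_distr_r.
  apply Rmult_le_compat_r; [left; apply Rinv_0_lt_compat; auto|auto].
Qed.

Lemma dens_le_c K n c : (cnt K (S n) <= c)%nat -> dens_ratio K n <= INR c / INR (S n).
Proof.
  intros H. unfold dens_ratio. apply le_INR in H.
  assert (0 < INR (S n)) by (apply lt_0_INR; lia).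
  unfold Rdiv. apply Rmult_le_compat_r; [left; apply Rinv_0_lt_compat; auto|auto].
Qed.

Lemma arch_nat r : exists N : nat, r < INR N.
Proof.
  destruct (archimed_cor1 (/ (Rabs r + 1))) as [N [HN HN0]].
  { apply Rinv_0_lt_compat. pose proof (Rabs_pos r); lra. }
  exists N. assert (0 < INR N) by (apply lt_0_INR; lia).
  assert (Rabs r + 1 < INR N).
  { rewrite <- (Rinv_inv (INR N)), <- (Rinv_inv (Rabs r + 1)).
    apply Rinv_lt_contravar; auto.
    apply Rmult_lt_0_compat; apply Rinv_0_lt_compat; auto. pose proof (Rabs_pos r); lra. }
  pose proof (Rle_abs r). lra.
Qed.

Lemma small_c c eps : eps > 0 -> exists N0, forall n, (N0 <= n)%nat -> INR c / INR (S n) < eps.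
Proof.
  intros He. destruct (arch_nat (INR c / eps)) as [N HN]. exists N. intros n Hn.
  assert (INR N <= INR n) by (apply le_INR; auto).
  assert (Hs : INR (S n) = INR n + 1) by (rewrite S_INR; auto).
  assert (0 < INR (S n)) by (apply lt_0_INR; lia).
  assert (INR c < eps * INR (S n)).
  { replace (INR c) with (eps * (INR c / eps)) by (field; lra).
    apply Rmult_lt_compat_l; lra. }
  unfold Rdiv. replace eps with (eps * INR (S n) * / INR (S n)) by (field; lra).
  apply Rmult_lt_compat_r; [apply Rinv_0_lt_compat|]; lra.
Qed.

Lemma small_inv eps : eps > 0 -> exists J : nat, / (INR J + 1) < eps.
Proof.
  intros He. destruct (arch_nat (/ eps)) as [J HJ]. exists J.
  rewrite <- (Rinv_inv eps). pose proof (pos_INR J).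
  apply Rinv_lt_contravar; [|lra].
  apply Rmult_lt_0_compat; [apply Rinv_0_lt_compat; auto|lra].
Qed.

Lemma inv_mono i j : (i <= j)%nat -> / (INR j + 1) <= / (INR i + 1).
Proof.
  intros H. apply le_INR in H. pose proof (pos_INR i).
  apply Rinv_le_contravar; lra.
Qed.

Fixpoint Tseq (f : nat -> nat) (j : nat) : nat :=
  match j with
  | O => (f O + 1)%nat
  | S j' => Nat.max (Tseq f j' + 1) (f j + 1)
  end.

Lemma Tseq_S f j : (Tseq f j < Tseq f (S j))%nat.
Proof. simpl. lia. Qed.

Lemma Tseq_ge f j : (f j + 1 <= Tseq f j)%nat.
Proof. destruct j; simpl; lia. Qed.

Lemma Tseq_lt f i j : (i < j)%nat -> (Tseq f i < Tseq f j)%nat.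
Proof.
  induction j; intros H; [lia|].
  destruct (Nat.eq_dec i j) as [->|Hne]; [apply Tseq_S|].
  pose proof (Tseq_S f j). pose proof (IHj ltac:(lia)). lia.
Qed.

Lemma Tseq_le f i j : (i <= j)%nat -> (Tseq f i <= Tseq f j)%nat.
Proof.
  intros H. destruct (Nat.eq_dec i j) as [->|Hne]; [lia|].
  pose proof (Tseq_lt f i j ltac:(lia)); lia.
Qed.

Lemma Tseq_cover f m : (Tseq f 0 <= m)%nat -> exists j, (Tseq f j <= m < Tseq f (S j))%nat.
Proof.
  induction m; intros H.
  - exists 0%nat. pose proof (Tseq_S f 0). lia.
  - destruct (le_lt_dec (Tseq f 0) m) as [Hl|Hl].
    + destruct (IHm Hl) as [j Hj].
      destruct (le_lt_dec (Tseq f (S j)) (S m)) as [H2|H2].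
      * exists (S j). pose proof (Tseq_S f (S j)). lia.
      * exists j. lia.
    + exists 0%nat. pose proof (Tseq_S f 0). lia.
Qed.

Lemma diag (A : nat -> nat -> Prop) (s : R) :
  (forall i j m, (i <= j)%nat -> A j m -> A i m) ->
  (forall j, lower_density (A j) >= s) ->
  exists B : nat -> Prop, lower_density B >= s /\
    (forall J, exists M, forall m, (M <= m)%nat -> B m -> A J m) /\
    (forall m, B m -> A 0%nat m).
Proof.
  intros Hnest Hld.
  assert (Hj : forall j, exists N, forall n, (N <= n)%nat -> dens_ratio (A j) n > s - / (INR j + 1)).
  { intros j. apply (proj1 (ld_ge (A j) s) (Hld j)). apply Rinv_0_lt_compat.
    pose proof (pos_INR j); lra. }
  set (Nf := fun j => proj1_sig (constructive_indefinite_description _ (Hj j))).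
  assert (HNf : forall j n, (Nf j <= n)%nat -> dens_ratio (A j) n > s - / (INR j + 1)).
  { intros j. exact (proj2_sig (constructive_indefinite_description _ (Hj j))). }
  clearbody Nf.
  set (T := Tseq Nf).
  exists (fun m => (T 0%nat <= m)%nat /\ forall j, (T j <= m)%nat -> A j m).
  split; [|split].
  - apply ld_ge. intros eps He.
    destruct (small_inv (eps/2)) as [J HJ]; [lra|].
    destruct (small_c (T 0%nat) (eps/2)) as [N0 HN0]; [lra|].
    exists (Nat.max (T J) N0). intros n Hn.
    assert (HTJ := Tseq_le Nf 0 J ltac:(lia)). fold T in HTJ.
    destruct (Tseq_cover Nf (S n)) as [j Hjn]; [fold T; lia|]. fold T in Hjn.
    assert (HJj : (J <= j)%nat).
    { destruct (le_lt_dec J j) as [?|Hlt]; auto.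
      assert (HH := Tseq_le Nf (S j) J ltac:(lia)). fold T in HH. lia. }
    assert (Hc : (cnt (A j) (S n) <= cnt (fun m => (T 0%nat <= m)%nat /\ forall j, (T j <= m)%nat -> A j m) (S n) + T 0%nat)%nat).
    { eapply Nat.le_trans; [apply (cnt_union _ (fun m => (T 0%nat <= m)%nat /\ forall j, (T j <= m)%nat -> A j m) (fun m => (m < T 0%nat)%nat))|].
      - intros m Hm Ajm. destruct (le_lt_dec (T 0%nat) m) as [Hl|Hl]; [left|right; auto].
        split; auto. intros i Hi.
        apply (Hnest i j); auto.
        destruct (le_lt_dec i j) as [?|Hlt]; auto.
        assert (HH := Tseq_le Nf (S j) i ltac:(lia)). fold T in HH. lia.
      - apply Nat.add_le_mono_l. apply cnt_bound. intros j' Hj' Hc. lia. }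
    apply dens_cmp in Hc.
    assert (Hd := HNf j n). assert (HTg := Tseq_ge Nf j). fold T in HTg.
    specialize (Hd ltac:(lia)).
    specialize (HN0 n ltac:(lia)).
    pose proof (inv_mono J j HJj). lra.
  - intros J. exists (T J). intros m Hm [_ HB]. apply HB; auto.
  - intros m [H0 HB]. apply HB; auto.
Qed.

Fixpoint iterk (g : nat -> nat) (n : nat) : nat :=
  match n with O => g O | S n' => g (iterk g n') end.

Lemma enum (B : nat -> Prop) : (forall m, B m -> (1 <= m)%nat) ->
  (forall M, exists m, (M < m)%nat /\ B m) ->
  exists k : nat -> nat, (forall n, B (k n)) /\ (forall n m, (n < m)%nat -> (k n < k m)%nat)
    /\ (forall m, B m -> exists n, k n = m).
Proof.
  intros HB1 Hinf.
  assert (Hnext : forall M, exists m, ((M < m)%nat /\ B m) /\ forall m', (M < m')%nat /\ B m' -> (m <= m')%nat).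
  { intros M. destruct (dec_inh_nat_subset_has_unique_least_element (fun m => (M < m)%nat /\ B m)) as [m [Hm _]].
    - intros n. apply classic.
    - apply Hinf.
    - exists m; exact Hm. }
  set (g := fun M => proj1_sig (constructive_indefinite_description _ (Hnext M))).
  assert (Hg : forall M, ((M < g M)%nat /\ B (g M)) /\ forall m', (M < m')%nat /\ B m' -> (g M <= m')%nat).
  { intros M. exact (proj2_sig (constructive_indefinite_description _ (Hnext M))). }
  clearbody g.
  exists (iterk g).
  assert (HS : forall n, (iterk g n < iterk g (S n))%nat) by (intros n; simpl; apply Hg).
  assert (Hmono : forall n m, (n < m)%nat -> (iterk g n < iterk g m)%nat).
  { intros n m; induction m; intros H; [lia|].
    destruct (Nat.eq_dec n m) as [->|]; [apply HS|]. pose proof (HS m). pose proof (IHm ltac:(lia)). lia. }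
  assert (Hge : forall n, (n <= iterk g n)%nat).
  { induction n; [lia|]. pose proof (HS n). lia. }
  split; [|split]; auto.
  - intros n. destruct n; simpl; apply Hg.
  - intros m Hm.
    assert (Hc : forall n, (m <= iterk g n)%nat -> exists i, iterk g i = m).
    { induction n; intros H.
      - exists 0%nat. simpl in *. pose proof (HB1 m Hm). pose proof (proj2 (Hg 0%nat) m ltac:(split; [lia|auto])). lia.
      - destruct (le_lt_dec m (iterk g n)) as [Hl|Hl]; [apply IHn; auto|].
        exists (S n). simpl in *. pose proof (proj2 (Hg (iterk g n)) m ltac:(split; auto)). lia. }
    apply (Hc m). apply Hge.
Qed.

Theorem mainTheorem1 (x : nat -> R) (L sigma : R) :
  0 < sigma <= 1 ->
  (index_conv x L >= sigma <->
   exists k : nat -> nat,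
     (forall n, (1 <= k n)%nat) /\
     (forall n m, (n < m)%nat -> (k n < k m)%nat) /\
     Un_cv (fun n => x (k n)) L /\
     lower_density (fun m => exists n, k n = m) >= sigma).
Proof.
  intros Hs. split.
  - intros Hi. rewrite index_ge in Hi.
    set (A := fun j n => (1 <= n)%nat /\ Rabs (x n - L) < / (INR j + 1)).
    destruct (diag A sigma) as [B [HB [HBA HB0]]].
    + intros i j m Hij [H1 H2]. split; auto. pose proof (inv_mono i j Hij). lra.
    + intros j. apply Hi. apply Rinv_0_lt_compat. pose proof (pos_INR j). lra.
    + assert (HBinf : forall M, exists m, (M < m)%nat /\ B m).
      { intros M. apply NNPP. intro Hno.
        destruct (proj1 (ld_ge B sigma) HB (sigma/2)) as [N HN]; [lra|].
        destruct (small_c M (sigma/2)) as [N0 HN0]; [lra|].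
        assert (Hc : (cnt B (S (Nat.max N N0)) <= M)%nat).
        { apply cnt_bound. intros j Hj HBj. apply Hno. eauto. }
        apply dens_le_c in Hc.
        specialize (HN (Nat.max N N0) ltac:(lia)). specialize (HN0 (Nat.max N N0) ltac:(lia)). lra. }
      destruct (enum B) as [k [Hk1 [Hk2 Hk3]]]; auto.
      { intros m Hm. apply HB0 in Hm. apply Hm. }
      assert (Hge : forall n, (n <= k n)%nat).
      { induction n; [lia|]. pose proof (Hk2 n (S n) ltac:(lia)). lia. }
      exists k. split; [|split; [|split]]; auto.
      * intros n. apply (HB0 _ (Hk1 n)).
      * intros eps He. destruct (small_inv eps He) as [J HJ].
        destruct (HBA J) as [M HM]. exists M. intros n Hn.
        unfold Rdist. destruct (HM (k n)) as [_ H2]; [pose proof (Hge n); lia|auto|]. lra.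
      * apply ld_ge. intros eps He.
        destruct (proj1 (ld_ge B sigma) HB eps He) as [N HN]. exists N. intros n Hn.
        assert (Hc : (cnt B (S n) <= cnt (fun m => exists n, k n = m) (S n) + 0)%nat).
        { eapply Nat.le_trans; [apply (cnt_union _ (fun m => exists n, k n = m) (fun _ => False))|].
          - intros m _ Hm. left. auto.
          - apply Nat.add_le_mono_l. apply cnt_bound. intros j _ F. exact F. }
        apply dens_cmp in Hc. specialize (HN n Hn).
        simpl INR in Hc. unfold Rdiv in Hc. rewrite Rmult_0_l in Hc. lra.
  - intros [k [Hk1 [Hk2 [Hcv Hd]]]]. apply index_ge. intros eps He.
    destruct (Hcv eps He) as [M HM].
    apply ld_ge. intros e He'.
    destruct (proj1 (ld_ge _ sigma) Hd (e/2)) as [N1 HN1]; [lra|].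
    destruct (small_c (k M) (e/2)) as [N0 HN0]; [lra|].
    exists (Nat.max N1 N0). intros n Hn.
    assert (Hc : (cnt (fun m => exists n, k n = m) (S n) <=
                  cnt (fun n => (1 <= n)%nat /\ (Rabs (x n - L) < eps)%R) (S n) + k M)%nat).
    { eapply Nat.le_trans; [apply (cnt_union _ (fun n => (1 <= n)%nat /\ Rabs (x n - L) < eps) (fun m => (m < k M)%nat))|].
      - intros m _ [i <-]. destruct (le_lt_dec M i) as [Hl|Hl].
        + left. split; auto. apply HM. lia.
        + right. auto.
      - apply Nat.add_le_mono_l. apply cnt_bound. intros j Hj F. lia. }
    apply dens_cmp in Hc. specialize (HN1 n ltac:(lia)). specialize (HN0 n ltac:(lia)). lra.
Qed.
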